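(* Let $n$ be odd and let $L=\bigoplus_{i\in\mathbb{Z}/n\mathbb{Z}}L_i$ be a $(\mathbb{Z}/n\mathbb{Z})$-graded Lie algebra over a field with $L_0=0$ that satisfies the selective metabelian condition. Let $a_1,a_2,a_3,a_4\in\mathbb{Z}/n\mathbb{Z}$ be such that $(a_1,a_2,a_3)$ is $(-1)$-independent and $a_4\in D(a_1,a_2,a_3)$. Then $$\big[[x_{a_1},x_{a_2}],[x_{a_3},x_{a_4}],x_b\big]=0$$ for all $x_{a_i}\in L_{a_i}$ ($i=1,\dots,4$) and all $x_b\in L_b$ with $b\notin\widetilde D(a_1,a_2,a_3,a_4)$.
   Context: A $(\mathbb{Z}/n\mathbb{Z})$-graded Lie algebra is $L=\bigoplus_{i=0}^{n-1}L_i$ with $[L_i,L_j]\subseteq L_{i+j \bmod n}$. Products $[y_1,y_2,\dots,y_s]$ are left-normed: $[\dots[[y_1,y_2],y_3],\dots,y_s]$. A sequence $(a_1,\dots,a_k)$ of elements of $\mathbb{Z}/n\mathbb{Z}$ is called $(-1)$-dependent if $t_1a_1+\dots+t_ka_k=0$ for some $t_i\in\{0,1\}$ not all zero, and $(-1)$-independent otherwise. For a $(-1)$-independent sequence $(a_1,\dots,a_k)$, $D(a_1,\dots,a_k)$ is the set of all $j\in\mathbb{Z}/n\mathbb{Z}$ such that $(a_1,\dots,a_k,j)$ is $(-1)$-dependent. For any sequence $(b_1,\dots,b_s)$, $\widetilde D(b_1,\dots,b_s)$ is the set of all $u_1b_1+\dots+u_sb_s$ with $u_i\in\{0,\pm1,\pm2\}$.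 $L$ satisfies the selective metabelian condition if $\big[[x_{d_1},x_{d_2}],[x_{d_3},x_{d_4}]\big]=0$ for all $x_{d_i}\in L_{d_i}$ whenever $(d_1,d_2,d_3,d_4)$ is $(-1)$-independent. *)

(* Defs.v *)
From HB Require Import structures.
From mathcomp Require Import all_boot all_order all_algebra.
Set Implicit Arguments. Unset Strict Implicit. Unset Printing Implicit Defensive.
Import Order.TTheory GRing.Theory Num.Theory.
Local Open Scope ring_scope.

Section Dep.
Variable G : zmodType.

Definition minus1_dep (s : seq G) : Prop :=
  exists t : seq bool, size t = size s /\ has id t /\ \sum_(x <- mask t s) x = 0.

Definition minus1_indep (s : seq G) : Prop := ~ minus1_dep s.

Definition Dset (s : seq G) (j : G) : Prop := minus1_dep (rcons s j).

Definition Dtilde (s : seq G) (c : G) : Prop :=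
  exists u : seq int, size u = size s /\ all (fun z => (-2 <= z <= 2)%R) u /\
    c = \sum_(p <- zip s u) p.1 *~ p.2.
End Dep.

Section Lie.
Variables (K : fieldType) (V : lmodType K).

Definition is_lie_bracket (br : V -> V -> V) : Prop :=
  [/\ (forall (a : K) x y z, br (a *: x + y) z = a *: br x z + br y z),
      (forall (a : K) x y z, br x (a *: y + z) = a *: br x y + br x z),
      (forall x, br x x = 0) &
      (forall x y z, br (br x y) z + br (br y z) x + br (br z x) y = 0)].

Definition is_grading (G : finZmodType) (br : V -> V -> V) (Lg : G -> V -> Prop)
  : Prop :=
  [/\ (forall g, Lg g 0),
      (forall g (a : K) x y, Lg g x -> Lg g y -> Lg g (a *: x + y)),
      (forall v, exists f : G -> V, (forall g, Lg g (f g)) /\ v = \sum_g f g),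
      (forall f : G -> V, (forall g, Lg g (f g)) -> \sum_g f g = 0 ->
          forall g, f g = 0) &
      (forall g h x y, Lg g x -> Lg h y -> Lg (g + h) (br x y))].

Definition selective_metabelian (G : zmodType) (br : V -> V -> V)
  (Lg : G -> V -> Prop) : Prop :=
  forall d1 d2 d3 d4 : G, minus1_indep [:: d1; d2; d3; d4] ->
  forall x1 x2 x3 x4, Lg d1 x1 -> Lg d2 x2 -> Lg d3 x3 -> Lg d4 x4 ->
    br (br x1 x2) (br x3 x4) = 0.
End Lie.

(* Main.v *)
Require Import Defs.
From HB Require Import structures.
From mathcomp Require Import all_boot all_order all_algebra.
From mathcomp Require Import ring.
Import GRing.Theory.
Local Open Scope ring_scope.

Definition lin {G : zmodType} (a1 a2 a3 a4 b : G) (t1 t2 t3 t4 t5 : bool) : G :=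
  (if t1 then a1 else 0) + (if t2 then a2 else 0) + (if t3 then a3 else 0)
  + (if t4 then a4 else 0) + (if t5 then b else 0).

Lemma indep3_facts (R : comNzRingType) (a1 a2 a3 a4 b : R) :
  minus1_indep [:: a1; a2; a3] ->
  forall t1 t2 t3 : bool, t1 || t2 || t3 ->
  lin a1 a2 a3 a4 b t1 t2 t3 false false != 0.
Proof.
move=> hi t1 t2 t3 ht; apply/eqP => h; apply: hi.
exists [:: t1; t2; t3]; split => //; split; first by clear h; case: t1 t2 t3 ht => [] [] [].
apply: (etrans _ h); rewrite /lin; clear h.
by case: t1 t2 t3 {ht} => [] [] []; rewrite /= ?big_cons ?big_nil; ring.
Qed.

Lemma b_facts (R : comNzRingType) (a1 a2 a3 a4 b : R) :
  ~ Dtilde [:: a1; a2; a3; a4] b ->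
  forall t1 t2 t3 t4 : bool, lin a1 a2 a3 a4 b t1 t2 t3 t4 true != 0.
Proof.
move=> hd t1 t2 t3 t4; apply/eqP => h; apply: hd.
pose f (t : bool) : int := if t then -1 else 0.
exists [:: f t1; f t2; f t3; f t4]; split => //; split.
  by rewrite /= /f; case: t1 h; case: t2; case: t3; case: t4.
move: h; rewrite /lin /f.
case: t1; case: t2; case: t3; case: t4; rewrite /= !big_cons big_nil /= ?mulrN1z ?mulr0z => h;
 apply/eqP; rewrite -subr_eq0; apply/eqP; apply: etrans h; ring.
Qed.

Lemma metab4 (G : zmodType) (K : fieldType) (V : lmodType K) (br : V -> V -> V)
  (Lg : G -> V -> Prop) (Hsel : selective_metabelian br Lg)
  (d1 d2 d3 d4 : G) y1 y2 y3 y4 :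
  Lg d1 y1 -> Lg d2 y2 -> Lg d3 y3 -> Lg d4 y4 ->
  d1 != 0 -> d2 != 0 -> d3 != 0 -> d4 != 0 ->
  d1 + d2 != 0 -> d1 + d3 != 0 -> d1 + d4 != 0 -> d2 + d3 != 0 -> d2 + d4 != 0 ->
  d3 + d4 != 0 -> d1 + (d2 + d3) != 0 -> d1 + (d2 + d4) != 0 ->
  d1 + (d3 + d4) != 0 -> d2 + (d3 + d4) != 0 -> d1 + (d2 + (d3 + d4)) != 0 ->
  br (br y1 y2) (br y3 y4) = 0.
Proof.
move=> l1 l2 l3 l4 *; apply: (Hsel _ _ _ _ _ _ _ _ _ l1 l2 l3 l4).
move=> [t [st [ht hs]]].
case: t st ht hs => [|t1 [|t2 [|t3 [|t4 [|]]]]] // _.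
case: t1; case: t2; case: t3; case: t4 => // _;
  rewrite /= ?big_cons ?big_nil ?addr0; move/eqP; apply/negP; assumption.
Qed.

Lemma lie_facts (K : fieldType) (V : lmodType K) (br : V -> V -> V) :
  is_lie_bracket br ->
  [/\ (forall x y z, br (x + y) z = br x z + br y z),
      (forall x y z, br z (x + y) = br z x + br z y),
      (forall x, br 0 x = 0), (forall x, br x 0 = 0) &
      ((forall a b c, br (br a b) c = br (br a c) b + br a (br b c)) /\
      (forall a b c, br c (br a b) = br (br c a) b + br a (br c b)))].
Proof.
rewrite /is_lie_bracket; case=> linl linr alt jac.
have addl x y z : br (x + y) z = br x z + br y z by have := linl 1 x y z; rewrite !scale1r.
have addr x y z : br z (x + y) = br z x + br z y by have := linr 1 z x y; rewrite !scale1r.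
have z0l x : br 0 x = 0.
  by have h := addl 0 0 x; rewrite addr0 in h; apply: (addrI (br 0 x)); rewrite -h addr0.
have z0r x : br x 0 = 0.
  by have h := addr 0 0 x; rewrite addr0 in h; apply: (addrI (br x 0)); rewrite -h addr0.
have anti x y : br x y = - br y x.
  apply/eqP; rewrite -subr_eq0 opprK; apply/eqP.
  by have := alt (x + y); rewrite addl !addr alt alt add0r addr0.
have oppl x y : br (- x) y = - br x y.
  by apply/eqP; rewrite -subr_eq0 opprK -addl addNr z0l.
have J1 a b c : br (br a b) c = br (br a c) b + br a (br b c).
  have := jac a b c; rewrite (anti (br b c) a) (anti c a) oppl => /eqP.
  by rewrite -addrA -opprD subr_eq0 => /eqP ->; rewrite addrC.
have oppr x y : br x (- y) = - br x y.
  by apply/eqP; rewrite -subr_eq0 opprK -addr addNr z0r.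
split => //; split => // a b c.
rewrite anti J1 opprD; congr (_ + _); first by rewrite -oppl -anti.
by rewrite (anti c b) oppr.
Qed.

Ltac has_atom x e := lazymatch e with context [x] => constr:(true) | _ => constr:(false) end.

Ltac reify_to_lin a1 a2 a3 a4 b e :=
  let t1 := has_atom a1 e in let t2 := has_atom a2 e in let t3 := has_atom a3 e in
  let t4 := has_atom a4 e in let t5 := has_atom b e in
  have ->: e = lin a1 a2 a3 a4 b t1 t2 t3 t4 t5 by rewrite /lin /=; ring.

Ltac nzclose a1 a2 a3 a4 b Hb Hi :=
  lazymatch goal with |- is_true (?e != 0) => reify_to_lin a1 a2 a3 a4 b e end;
  lazymatch goal with
  | |- is_true (lin _ _ _ _ _ _ _ _ _ true != 0) => exact: Hb
  | |- is_true (lin _ _ _ _ _ ?t1 ?t2 ?t3 false false != 0) => exact: (Hi t1 t2 t3 erefl)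
  | |- is_true (lin _ _ _ _ _ ?t1 ?t2 ?t3 ?t4 ?t5 != 0) =>
      match goal with H : is_true (lin _ _ _ _ _ t1 t2 t3 t4 t5 != 0) |- _ => exact H end
  end.

Ltac zclose a1 a2 a3 a4 b :=
  lazymatch goal with |- ?e = 0 => reify_to_lin a1 a2 a3 a4 b e end;
  lazymatch goal with |- lin _ _ _ _ _ ?t1 ?t2 ?t3 ?t4 ?t5 = 0 =>
    match goal with H : lin _ _ _ _ _ t1 t2 t3 t4 t5 = 0 |- _ => exact H end end.

(* Z/nZ is 'I_m.+1 with n = m.+1 (n odd, so n >= 1). *)
Theorem lemma1 (m : nat) (K : fieldType) (V : lmodType K) (br : V -> V -> V)
  (Lg : 'I_m.+1 -> V -> Prop) :
  odd m.+1 ->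
  is_lie_bracket br ->
  is_grading br Lg ->
  (forall x, Lg 0 x -> x = 0) ->
  selective_metabelian br Lg ->
  forall a1 a2 a3 a4 b : 'I_m.+1,
  minus1_indep [:: a1; a2; a3] ->
  Dset [:: a1; a2; a3] a4 ->
  ~ Dtilde [:: a1; a2; a3; a4] b ->
  forall x1 x2 x3 x4 xb,
  Lg a1 x1 -> Lg a2 x2 -> Lg a3 x3 -> Lg a4 x4 -> Lg b xb ->
  br (br (br x1 x2) (br x3 x4)) xb = 0.
Proof.
move: Lg; case: m => [|k] Lg _ Hlie Hgr H0 Hsel a1 a2 a3 a4 b hi _ hDt x1 x2 x3 x4 xb h1 h2 h3 h4 hb.
  exfalso; apply: hi; exists [:: true; false; false]; split => //; split => //.
  by rewrite /= big_cons big_nil addr0 (ord1 a1).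
have Hi := @indep3_facts _ a1 a2 a3 a4 b hi.
have Hb := @b_facts _ a1 a2 a3 a4 b hDt.
have [brDl brDr br0l br0r [J1 J2]] := @lie_facts _ _ _ Hlie.
have hL : forall g h x y, Lg g x -> Lg h y -> Lg (g + h) (br x y).
  by case: Hgr.
have dz : forall g x, Lg g x -> g = 0 -> x = 0.
  by move=> g x hx hg; apply: H0; rewrite -hg.
have mb := @metab4 _ _ _ _ _ Hsel.
have [z0|nz0] := eqVneq (lin a1 a2 a3 a4 b false false false true false) 0.
  have -> : x4 = 0 by apply: (dz _ _ h4); zclose a1 a2 a3 a4 b.
  by rewrite br0r br0r br0l.
have [z3|nz3] := eqVneq (lin a1 a2 a3 a4 b false false true true false) 0.
  have -> : br x3 x4 = 0 by apply: (dz _ _ (hL _ _ _ _ h3 h4)); zclose a1 a2 a3 a4 b.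
  by rewrite br0r br0l.
have [z123|nz123] := eqVneq (lin a1 a2 a3 a4 b true true true true false) 0.
  have -> : br (br x1 x2) (br x3 x4) = 0.
    by apply: (dz _ _ (hL _ _ _ _ (hL _ _ _ _ h1 h2) (hL _ _ _ _ h3 h4))); zclose a1 a2 a3 a4 b.
  by rewrite br0l.
have [/andP [/eqP z13 /eqP z23] | nboth] := boolP
   ((lin a1 a2 a3 a4 b true false true true false == 0) &&
    (lin a1 a2 a3 a4 b false true true true false == 0)).
  have h13 : br x1 (br x3 x4) = 0.
    by apply: (dz _ _ (hL _ _ _ _ h1 (hL _ _ _ _ h3 h4))); zclose a1 a2 a3 a4 b.
  have h23 : br x2 (br x3 x4) = 0.
    by apply: (dz _ _ (hL _ _ _ _ h2 (hL _ _ _ _ h3 h4))); zclose a1 a2 a3 a4 b.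
  by rewrite (J1 x1 x2 (br x3 x4)) h13 h23 br0l br0r addr0 br0l.
have hB : br (br x1 x2) (br (br x3 x4) xb) = 0.
  rewrite (J1 x3 x4 xb) brDr J2.
  have -> : br (br x1 x2) (br x3 xb) = 0.
    apply: (mb _ _ _ _ _ _ _ _ h1 h2 h3 hb); nzclose a1 a2 a3 a4 b Hb Hi.
  have -> : br (br x3 xb) (br (br x1 x2) x4) = 0.
    have [z12|nz12] := eqVneq (lin a1 a2 a3 a4 b true true false true false) 0.
      have -> : br (br x1 x2) x4 = 0.
        by apply: (dz _ _ (hL _ _ _ _ (hL _ _ _ _ h1 h2) h4)); zclose a1 a2 a3 a4 b.
      by rewrite br0r.
    apply: (mb _ _ _ _ _ _ _ _ h3 hb (hL _ _ _ _ h1 h2) h4); nzclose a1 a2 a3 a4 b Hb Hi.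
  have -> : br (br x1 x2) (br x3 (br x4 xb)) = 0.
    apply: (mb _ _ _ _ _ _ _ _ h1 h2 h3 (hL _ _ _ _ h4 hb)); nzclose a1 a2 a3 a4 b Hb Hi.
  by rewrite br0l !addr0.
have hA : br (br (br x1 x2) xb) (br x3 x4) = 0.
  have [z12|nz12] := eqVneq (lin a1 a2 a3 a4 b true true false true false) 0; last first.
    apply: (mb _ _ _ _ _ _ _ _ (hL _ _ _ _ h1 h2) hb h3 h4); nzclose a1 a2 a3 a4 b Hb Hi.
  have nz1 : lin a1 a2 a3 a4 b true false false true false != 0.
    apply/eqP => z1; have := Hi false true false erefl.
    rewrite (_ : lin a1 a2 a3 a4 b false true false false false =
      lin a1 a2 a3 a4 b true true false true false - lin a1 a2 a3 a4 b true false false true false).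
      by rewrite z12 z1 subrr eqxx.
    by rewrite /lin /=; ring.
  have nz2 : lin a1 a2 a3 a4 b false true false true false != 0.
    apply/eqP => z2; have := Hi true false false erefl.
    rewrite (_ : lin a1 a2 a3 a4 b true false false false false =
      lin a1 a2 a3 a4 b true true false true false - lin a1 a2 a3 a4 b false true false true false).
      by rewrite z12 z2 subrr eqxx.
    by rewrite /lin /=; ring.
  rewrite (J1 x1 x2 xb) brDl.
  have -> : br (br (br x1 xb) x2) (br x3 x4) = 0.
    have [z23|nz23] := eqVneq (lin a1 a2 a3 a4 b false true true true false) 0; last first.
      apply: (mb _ _ _ _ _ _ _ _ (hL _ _ _ _ h1 hb) h2 h3 h4); nzclose a1 a2 a3 a4 b Hb Hi.
    have nz13 : lin a1 a2 a3 a4 b true false true true false != 0.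
      by apply/negP => /eqP z13; apply: (negP nboth); rewrite z13 z23 eqxx.
    rewrite (J1 (br x1 xb) x2 (br x3 x4)).
    have -> : br (br x1 xb) (br x3 x4) = 0.
      apply: (mb _ _ _ _ _ _ _ _ h1 hb h3 h4); nzclose a1 a2 a3 a4 b Hb Hi.
    have -> : br x2 (br x3 x4) = 0.
      by apply: (dz _ _ (hL _ _ _ _ h2 (hL _ _ _ _ h3 h4))); zclose a1 a2 a3 a4 b.
    by rewrite br0l br0r addr0.
  have -> : br (br x1 (br x2 xb)) (br x3 x4) = 0.
    have [z13|nz13] := eqVneq (lin a1 a2 a3 a4 b true false true true false) 0; last first.
      apply: (mb _ _ _ _ _ _ _ _ h1 (hL _ _ _ _ h2 hb) h3 h4); nzclose a1 a2 a3 a4 b Hb Hi.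
    have nz23 : lin a1 a2 a3 a4 b false true true true false != 0.
      by apply/negP => /eqP z23; apply: (negP nboth); rewrite z13 z23 eqxx.
    rewrite (J1 x1 (br x2 xb) (br x3 x4)).
    have -> : br x1 (br x3 x4) = 0.
      by apply: (dz _ _ (hL _ _ _ _ h1 (hL _ _ _ _ h3 h4))); zclose a1 a2 a3 a4 b.
    have -> : br (br x2 xb) (br x3 x4) = 0.
      apply: (mb _ _ _ _ _ _ _ _ h2 hb h3 h4); nzclose a1 a2 a3 a4 b Hb Hi.
    by rewrite br0l br0r addr0.
  by rewrite addr0.
by rewrite (J1 (br x1 x2) (br x3 x4) xb) hA hB addr0.
Qed.
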